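(* Let $\mathcal{P}(3^3)$ be the graph whose vertices are the partitions of $\{1,\ldots,9\}$ into three cells each of size three, two such partitions being adjacent if and only if each cell of one partition contains exactly one point from each cell of the other. For $1\le i<j\le 9$ let $S_{i,j}$ be the set of vertices of $\mathcal{P}(3^3)$ in which $i$ and $j$ lie in the same cell. Then every independent set of size $70$ in $\mathcal{P}(3^3)$ is equal to $S_{i,j}$ for some $1\le i<j\le 9$.
   Context: Each set $S_{i,j}$ has exactly 70 elements and is an independent set of $\mathcal{P}(3^3)$; the graph $\mathcal{P}(3^3)$ has 280 vertices and is regular of valency 36. *)

(* Defs.v *)
From mathcomp Require Import all_boot.
Set Implicit Arguments. Unset Strict Implicit. Unset Printing Implicit Defensive.

(* Points {1,...,9} are represented by 'I_9 = {0,...,8}. *)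
Definition point := 'I_9.

Definition is_P333 (P : {set {set point}}) : bool :=
  [&& partition P [set: point], #|P| == 3 & [forall C in P, #|C| == 3]].

Definition vertex := {P : {set {set point}} | is_P333 P}.

Definition adj (P Q : vertex) : bool :=
  [forall C in val P, forall D in val Q, #|C :&: D| == 1].

Definition independent (A : {set vertex}) : bool :=
  [forall x in A, forall y in A, ~~ adj x y].

Definition Sij (i j : point) : {set vertex} :=
  [set P : vertex | [exists C in val P, (i \in C) && (j \in C)]].

(* Main.v *)
Require Import Defs.
From mathcomp Require Import all_boot zify.
Set Implicit Arguments. Unset Strict Implicit. Unset Printing Implicit Defensive.

(* Concrete model: a vertex is encoded by the canonical
   labelling of its cells; the result is then checked by an exhaustive,
   verified search over the 280 concrete vertices. *)

Definition pairs0 : seq (nat * nat) :=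
  [seq p <- [seq (i, j) | i <- iota 0 9, j <- iota 0 9] | p.1 < p.2].
Definition pairs := Eval vm_compute in pairs0.
Definition same (l : seq nat) (p : nat * nat) : bool := nth 0 l p.1 == nth 0 l p.2.
Definition compat (l w : seq nat) : bool := has (same w) [seq p <- pairs | same l p].
Definition cadj l w := ~~ compat l w.

Fixpoint tuples (n : nat) : seq (seq nat) :=
  if n is n'.+1 then [seq x :: t | x <- iota 0 3, t <- tuples n'] else [:: [::]].
Definition U := [seq l <- tuples 9 | all (fun k => count (pred1 k) l == 3) (iota 0 3)].
Definition canon (l : seq nat) := [seq index v (undup l) | v <- l].
Definition L0 := undup (map canon U).
Definition L := Eval vm_compute in L0.
Lemma L0E : L0 = L. Proof. vm_compute. reflexivity. Qed.

Definition Li := Eval vm_compute in zip (iota 0 280) L.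
Definition NB := Eval vm_compute in [seq [seq b.1 | b <- Li & (a.1 < b.1) && cadj a.2 b.2] | a <- Li].
Definition nbi i := nth [::] NB i.
Definition clidx : seq (seq nat) :=
  flatten (flatten (flatten
  [seq [seq [seq [seq [:: a; b; c; d]
     | d <- [seq d <- nbi c | (d \in nbi a) && (d \in nbi b)]]
     | c <- [seq c <- nbi b | c \in nbi a]] | b <- nbi a] | a <- iota 0 280])).
Definition cl := Eval vm_compute in [seq [seq nth [::] L i | i <- K] | K <- clidx].
Definition Sq : seq (seq (seq nat)) := [::
[::[::0;1;2;1;0;2;0;1;2];[::2;1;1;0;0;0;1;2;2];[::0;2;0;0;2;1;1;1;2];[::0;0;1;2;1;0;2;1;2]];
[::[::0;1;2;0;2;0;1;1;2];[::1;0;0;0;1;2;1;2;2];[::1;0;1;2;0;0;2;1;2];[::2;2;0;1;1;0;0;1;2]];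
[::[::0;1;2;0;2;1;0;1;2];[::2;0;0;0;1;1;1;2;2];[::0;2;0;1;1;0;2;1;2];[::0;0;1;2;0;2;1;1;2]];
[::[::0;1;2;0;0;1;1;2;2];[::1;0;0;2;0;2;1;1;2];[::0;1;0;1;2;0;2;1;2];[::2;2;0;0;1;1;0;1;2]];
[::[::1;2;0;0;1;2;0;1;2];[::2;1;1;0;0;0;2;1;2];[::0;1;0;2;1;0;1;2;2];[::0;0;2;0;2;1;1;1;2]];
[::[::2;1;0;1;0;0;1;2;2];[::0;1;1;0;0;2;2;1;2];[::0;2;0;1;2;1;0;1;2];[::0;0;2;2;1;0;1;1;2]];
[::[::1;2;0;2;1;0;0;1;2];[::1;0;0;1;0;2;1;2;2];[::2;1;2;0;0;0;1;1;2];[::0;0;1;1;2;0;2;1;2]];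
[::[::0;1;2;2;0;1;0;1;2];[::2;0;0;1;0;2;1;1;2];[::1;2;1;0;0;0;2;1;2];[::0;0;1;0;2;1;1;2;2]];
[::[::2;1;0;0;2;1;0;1;2];[::0;2;2;1;1;0;0;1;2];[::1;0;1;2;0;2;0;1;2];[::0;0;1;0;1;1;2;2;2]];
[::[::0;1;2;2;1;0;0;1;2];[::2;0;1;0;1;0;1;2;2];[::0;2;1;0;0;1;2;1;2];[::0;0;0;1;2;2;1;1;2]];
[::[::2;0;1;0;0;1;1;2;2];[::0;1;1;0;2;0;2;1;2];[::0;2;0;1;0;2;1;1;2];[::0;0;2;2;1;1;0;1;2]];
[::[::1;2;0;0;0;2;1;1;2];[::2;0;1;0;2;1;0;1;2];[::0;1;2;0;1;0;2;1;2];[::0;0;0;2;1;1;1;2;2]];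
[::[::0;2;1;1;0;0;2;1;2];[::1;0;2;0;2;0;1;1;2];[::2;1;0;2;1;0;0;1;2];[::0;0;0;1;1;2;1;2;2]];
[::[::1;0;2;0;1;2;0;1;2];[::0;1;1;2;2;0;0;1;2];[::0;1;0;0;1;1;2;2;2];[::2;2;0;1;0;1;0;1;2]];
[::[::2;1;0;0;1;0;2;1;2];[::0;2;2;0;0;1;1;1;2];[::1;0;1;0;2;2;0;1;2];[::0;0;1;2;1;0;1;2;2]];
[::[::1;0;2;1;0;0;2;1;2];[::2;1;1;0;2;0;0;1;2];[::0;2;0;2;1;0;1;1;2];[::1;1;0;0;0;2;1;2;2]];
[::[::0;2;1;0;1;0;2;1;2];[::2;0;0;1;2;0;1;1;2];[::1;0;1;0;0;2;1;2;2];[::1;1;2;2;0;0;0;1;2]];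
[::[::1;0;2;0;1;0;2;1;2];[::1;0;0;2;0;1;1;2;2];[::0;1;0;0;2;2;1;1;2];[::2;2;1;0;0;1;0;1;2]];
[::[::1;2;0;1;2;0;0;1;2];[::2;0;0;0;1;1;2;1;2];[::0;1;0;2;0;2;1;1;2];[::0;0;2;1;1;0;1;2;2]];
[::[::0;1;2;1;0;0;1;2;2];[::2;0;0;1;0;1;2;1;2];[::0;2;0;0;1;2;1;1;2];[::1;1;0;2;2;0;0;1;2]];
[::[::2;0;1;0;0;2;1;1;2];[::1;0;0;2;1;0;2;1;2];[::0;2;0;0;1;1;1;2;2];[::0;0;2;1;2;1;0;1;2]];
[::[::1;0;2;2;0;1;0;1;2];[::2;0;1;0;2;0;1;1;2];[::1;2;0;1;0;0;1;2;2];[::0;0;0;1;1;2;2;1;2]];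
[::[::1;2;0;0;1;0;1;2;2];[::2;0;0;2;1;1;0;1;2];[::1;0;1;0;0;2;2;1;2];[::0;0;2;1;2;0;1;1;2]];
[::[::1;2;0;0;2;0;1;1;2];[::2;0;0;1;1;2;0;1;2];[::0;1;0;2;0;1;2;1;2];[::0;0;2;0;1;1;1;2;2]];
[::[::0;1;2;2;0;0;1;1;2];[::2;0;0;1;1;0;2;1;2];[::1;2;1;0;2;0;0;1;2];[::0;0;1;0;1;2;1;2;2]];
[::[::1;0;2;0;2;1;0;1;2];[::2;0;0;2;1;0;1;1;2];[::1;2;1;0;0;0;1;2;2];[::0;0;1;1;0;2;2;1;2]];
[::[::0;1;2;0;1;2;0;1;2];[::2;0;0;1;2;1;0;1;2];[::1;2;1;2;0;0;0;1;2];[::1;1;0;0;0;1;2;2;2]];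
[::[::0;2;1;0;2;1;0;1;2];[::0;1;1;2;0;0;1;2;2];[::2;0;2;0;1;0;1;1;2];[::1;1;0;0;0;2;2;1;2]];
[::[::1;2;0;1;0;2;0;1;2];[::1;0;0;0;1;1;2;2;2];[::2;1;2;0;1;0;0;1;2];[::0;0;1;2;2;1;0;1;2]];
[::[::2;1;0;2;0;1;0;1;2];[::1;2;2;0;1;0;0;1;2];[::1;0;1;0;0;1;2;2;2];[::0;0;1;1;2;2;0;1;2]];
[::[::0;2;1;2;1;0;0;1;2];[::0;1;1;0;0;1;2;2;2];[::2;0;2;1;0;1;0;1;2];[::1;1;0;0;2;2;0;1;2]];
[::[::0;2;1;0;0;2;1;1;2];[::1;0;0;2;0;1;2;1;2];[::2;1;2;1;0;0;0;1;2];[::1;1;0;0;2;0;1;2;2]];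
[::[::2;1;0;0;1;0;1;2;2];[::0;1;2;1;0;0;2;1;2];[::0;2;1;0;1;2;0;1;2];[::0;0;0;2;2;1;1;1;2]];
[::[::1;0;2;0;0;1;1;2;2];[::1;0;0;2;1;2;0;1;2];[::0;1;0;0;2;1;2;1;2];[::2;2;0;1;0;0;1;1;2]];
[::[::2;1;0;1;0;2;0;1;2];[::0;2;2;0;1;1;0;1;2];[::1;0;1;2;2;0;0;1;2];[::0;0;1;1;0;1;2;2;2]];
[::[::1;0;2;1;0;2;0;1;2];[::0;1;1;2;0;0;2;1;2];[::1;0;1;0;2;0;1;2;2];[::2;2;0;0;0;1;1;1;2]];
[::[::0;1;2;0;0;2;1;1;2];[::1;0;0;0;2;1;2;1;2];[::1;0;1;2;0;0;1;2;2];[::2;2;1;0;1;0;0;1;2]];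
[::[::2;1;0;0;0;2;1;1;2];[::1;0;0;1;2;0;2;1;2];[::0;2;0;2;1;1;0;1;2];[::0;0;2;1;0;1;1;2;2]];
[::[::0;2;1;1;0;2;0;1;2];[::1;0;2;0;0;1;2;1;2];[::2;1;0;2;0;0;1;1;2];[::0;0;0;1;2;1;1;2;2]];
[::[::2;0;1;1;0;0;1;2;2];[::0;2;2;1;0;1;0;1;2];[::0;1;0;2;2;0;1;1;2];[::0;0;1;0;1;2;2;1;2]];
[::[::1;2;0;0;0;1;2;1;2];[::2;1;0;1;2;0;0;1;2];[::1;0;2;1;0;0;1;2;2];[::0;0;0;2;1;2;1;1;2]];
[::[::0;2;1;0;1;0;1;2;2];[::1;0;0;0;2;2;1;1;2];[::2;0;2;1;1;0;0;1;2];[::0;0;1;2;0;1;2;1;2]];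
[::[::1;2;0;2;0;0;1;1;2];[::2;1;1;0;0;2;0;1;2];[::0;1;0;0;2;1;1;2;2];[::0;0;2;1;0;1;2;1;2]];
[::[::0;2;1;1;0;0;1;2;2];[::1;0;2;0;0;2;1;1;2];[::2;0;1;2;1;0;0;1;2];[::0;0;0;1;2;1;2;1;2]];
[::[::2;0;1;2;0;0;1;1;2];[::1;0;0;0;2;1;1;2;2];[::0;2;0;1;0;1;2;1;2];[::1;1;2;0;0;2;0;1;2]];
[::[::2;0;1;2;0;1;0;1;2];[::1;2;2;0;0;0;1;1;2];[::0;1;0;1;0;2;2;1;2];[::0;0;1;1;2;0;1;2;2]];
[::[::0;1;2;0;1;0;1;2;2];[::2;0;0;0;2;1;1;1;2];[::0;2;0;1;1;2;0;1;2];[::1;1;0;2;0;0;2;1;2]];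
[::[::0;2;1;0;2;0;1;1;2];[::1;0;0;0;1;2;2;1;2];[::2;1;2;0;0;1;0;1;2];[::1;1;0;2;0;0;1;2;2]];
[::[::2;0;1;0;1;0;2;1;2];[::1;0;0;1;2;2;0;1;2];[::0;2;0;1;1;0;1;2;2];[::0;0;2;2;0;1;1;1;2]];
[::[::2;0;1;1;0;2;0;1;2];[::1;0;0;2;2;0;1;1;2];[::0;2;0;1;0;1;1;2;2];[::0;0;2;0;1;1;2;1;2]];
[::[::2;1;0;0;1;2;0;1;2];[::0;2;1;2;0;1;0;1;2];[::1;0;2;1;2;0;0;1;2];[::0;0;0;1;1;1;2;2;2]];
[::[::2;1;0;0;0;1;1;2;2];[::0;2;2;1;0;0;1;1;2];[::0;1;0;2;1;2;0;1;2];[::0;0;1;0;2;1;2;1;2]];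
[::[::1;2;0;0;2;1;0;1;2];[::2;1;1;2;0;0;0;1;2];[::0;1;0;1;0;1;2;2;2];[::0;0;2;1;1;2;0;1;2]];
[::[::2;1;0;0;1;0;2;1;2];[::1;2;2;0;0;1;0;1;2];[::0;1;0;2;0;1;1;2;2];[::0;0;1;0;2;2;1;1;2]];
[::[::0;2;1;1;0;0;2;1;2];[::2;0;0;1;0;1;1;2;2];[::0;1;0;2;2;1;0;1;2];[::0;0;2;0;1;2;1;1;2]];
[::[::0;2;1;1;0;2;0;1;2];[::2;0;0;2;0;1;1;1;2];[::0;1;0;1;2;0;1;2;2];[::1;1;2;0;0;0;2;1;2]];
[::[::2;0;1;1;0;0;2;1;2];[::0;1;1;0;2;0;1;2;2];[::0;2;0;2;0;1;1;1;2];[::1;1;2;0;0;2;0;1;2]];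
[::[::0;2;1;1;2;0;0;1;2];[::0;1;1;0;0;1;2;2;2];[::2;0;2;0;1;1;0;1;2];[::1;1;0;2;0;2;0;1;2]];
[::[::0;2;1;2;1;0;0;1;2];[::0;1;1;0;0;2;1;2;2];[::2;0;2;1;0;0;1;1;2];[::1;1;0;0;2;0;2;1;2]];
[::[::2;1;0;1;0;0;2;1;2];[::0;2;2;0;1;0;1;1;2];[::1;0;1;2;2;0;0;1;2];[::0;0;1;1;0;2;1;2;2]];
[::[::0;1;2;0;0;1;2;1;2];[::2;0;0;0;1;1;1;2;2];[::0;2;0;1;2;0;1;1;2];[::0;0;1;2;1;2;0;1;2]];
[::[::1;2;0;2;0;1;0;1;2];[::2;0;0;1;2;0;1;1;2];[::0;1;0;0;1;2;2;1;2];[::1;1;2;0;0;0;1;2;2]];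
[::[::0;2;1;2;0;0;1;1;2];[::2;0;0;1;1;0;2;1;2];[::0;1;0;0;1;2;1;2;2];[::1;1;2;0;2;0;0;1;2]];
[::[::2;1;0;0;1;0;2;1;2];[::1;2;2;1;0;0;0;1;2];[::0;1;0;1;0;2;1;2;2];[::0;0;1;2;2;0;1;1;2]];
[::[::1;2;0;0;1;0;2;1;2];[::0;1;1;0;2;2;0;1;2];[::2;0;2;0;0;1;1;1;2];[::0;0;1;2;1;0;1;2;2]];
[::[::1;2;0;0;0;1;1;2;2];[::2;0;0;2;1;1;0;1;2];[::1;0;1;0;2;0;2;1;2];[::0;0;2;1;0;2;1;1;2]];
[::[::1;0;2;2;0;0;1;1;2];[::2;0;1;0;1;2;0;1;2];[::0;2;1;0;0;1;1;2;2];[::0;0;0;1;2;1;2;1;2]];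
[::[::0;1;2;1;2;0;0;1;2];[::2;0;0;1;1;0;1;2;2];[::0;2;0;0;1;1;2;1;2];[::0;0;1;2;0;2;1;1;2]];
[::[::1;0;2;2;1;0;0;1;2];[::1;0;0;1;0;1;2;2;2];[::0;1;0;1;2;2;0;1;2];[::2;2;1;0;0;1;0;1;2]];
[::[::1;0;2;0;1;0;1;2;2];[::1;0;0;1;2;2;0;1;2];[::0;1;0;2;1;0;2;1;2];[::2;2;0;0;0;1;1;1;2]];
[::[::1;0;2;0;2;1;0;1;2];[::1;0;0;2;1;0;1;2;2];[::0;1;0;0;1;2;2;1;2];[::2;2;1;0;0;0;1;1;2]];
[::[::1;2;0;1;0;0;2;1;2];[::0;1;1;2;0;2;0;1;2];[::2;0;2;0;0;1;1;1;2];[::0;0;1;1;2;0;1;2;2]];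
[::[::2;1;0;0;2;0;1;1;2];[::1;0;0;2;0;1;1;2;2];[::1;2;1;0;0;2;0;1;2];[::0;0;2;0;1;1;2;1;2]];
[::[::2;1;0;0;0;1;2;1;2];[::0;2;2;0;1;0;1;1;2];[::1;0;1;0;2;2;0;1;2];[::0;0;1;2;0;1;1;2;2]];
[::[::1;0;2;0;0;1;2;1;2];[::1;0;0;1;2;0;1;2;2];[::0;1;0;2;0;2;1;1;2];[::2;2;1;1;0;0;0;1;2]];
[::[::1;0;2;1;0;0;1;2;2];[::1;0;0;2;2;1;0;1;2];[::0;1;0;1;0;2;2;1;2];[::2;2;0;0;1;0;1;1;2]];
[::[::2;0;1;1;2;0;0;1;2];[::1;0;2;0;0;2;1;1;2];[::0;2;1;0;1;0;1;2;2];[::0;0;0;2;1;1;2;1;2]];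
[::[::2;0;1;0;2;1;0;1;2];[::1;0;0;2;0;2;1;1;2];[::0;2;0;0;1;1;1;2;2];[::0;0;2;1;1;0;2;1;2]];
[::[::0;1;2;2;0;0;1;1;2];[::1;0;0;1;0;2;2;1;2];[::1;0;1;0;2;0;1;2;2];[::2;2;1;0;0;1;0;1;2]];
[::[::0;1;2;0;0;1;1;2;2];[::2;0;0;0;1;2;1;1;2];[::0;2;0;1;2;1;0;1;2];[::1;1;0;2;0;0;2;1;2]];
[::[::2;0;1;0;0;1;2;1;2];[::1;0;0;2;1;2;0;1;2];[::0;2;0;0;1;1;1;2;2];[::0;0;2;1;2;0;1;1;2]]].

Fixpoint dfs9 (S : seq (seq (seq nat))) (chosen : seq (seq nat)) : bool :=
  match S with
  | [::] => has (fun p => all (fun l => same l p) chosen) pairs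
  | K :: S' => all (fun v => let sv := [seq p <- pairs | same v p] in
     if all (fun w => has (same w) sv) chosen then dfs9 S' (v :: chosen) else true) K
  end.


Lemma F1 : uniq L. Proof. by vm_compute. Qed.
Lemma F2 : all (fun K => uniq K && all (fun u => all (fun w => (u == w) || cadj u w) K) K) cl.
Proof. by vm_compute. Qed.
Lemma F3 : all (fun v => count (fun K => v \in K) cl == 12) L. Proof. by vm_compute. Qed.
Lemma F3s : size cl = 840. Proof. by vm_compute. Qed.
Lemma F4 : all (fun K => K \in cl) Sq. Proof. by vm_compute. Qed.
Lemma F5 : all (fun v => has (fun K => v \in K) Sq) L. Proof. by vm_compute. Qed.
Lemma F6 : dfs9 Sq [::]. Proof. by vm_compute. Qed.
Lemma F7 : all (fun p => count (same^~ p) L == 70) pairs. Proof. by vm_compute. Qed.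
Lemma F8 : all (fun p => (p.1 < p.2) && (p.2 < 9)) pairs. Proof. by vm_compute. Qed.
Lemma F9 : all (fun x => all (fun y => (x < y) ==> ((x, y) \in pairs)) (iota 0 9)) (iota 0 9).
Proof. by vm_compute. Qed.



Lemma in_tl (T : eqType) (x y : T) (s : seq T) : y \in s -> y \in x :: s.
Proof. by rewrite inE => ->; rewrite orbT. Qed.


Lemma cnt_card (T : finType) (a : pred T) : count a (enum T) = #|a|.
Proof. by rewrite cardE /enum_mem size_filter /= filter_predT. Qed.

Lemma index_eq (T : eqType) (s : seq T) (a b : T) :
  a \in s -> b \in s -> (index a s == index b s) = (a == b).
Proof.
move=> Ha Hb; apply/eqP/eqP => [h|-> //].
by rewrite -(nth_index a Ha) h nth_index.
Qed.

Lemma mem_tuples n (l : seq nat) :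
  all (fun x => x < 3) l -> size l = n -> l \in tuples n.
Proof.
elim: n l => [|n IH] [|x l] // /andP[Hx Hl] [Hs].
have -> : tuples n.+1 = [seq x :: t | x <- iota 0 3, t <- tuples n] by [].
apply: (allpairs_f (fun x t => x :: t)); first by rewrite mem_iota.
exact: IH.
Qed.

Lemma sumn_add (T : Type) (f g : T -> nat) (t : seq T) :
  sumn [seq f x + g x | x <- t] = sumn (map f t) + sumn (map g t).
Proof. elim: t => //= x t ->; lia. Qed.

Lemma sumn_count (T : Type) (a : pred T) (t : seq T) :
  sumn [seq (a x : nat) | x <- t] = count a t.
Proof. by elim: t => //= x t ->. Qed.

Lemma sumn_exch (A B : Type) (R : A -> B -> bool) (s : seq A) (t : seq B) :
  sumn [seq count (fun a => R a b) s | b <- t] = sumn [seq count (R a) t | a <- s].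
Proof.
elim: s => /= [|a s IH]; first by elim: t.
rewrite -IH -sumn_count -sumn_add.
by congr sumn; apply: eq_map => b.
Qed.

Lemma sumn_const (T : Type) (t : seq T) c : sumn [seq c | _ <- t] = c * size t.
Proof. elim: t => [|_ t IH] /=; [by rewrite muln0 | rewrite IH; lia]. Qed.

Lemma sumn_le1 (T : eqType) (f : T -> nat) (s : seq T) :
  (forall x, x \in s -> f x <= 1) -> sumn (map f s) <= size s.
Proof.
elim: s => //= x s IH H.
have := H x (mem_head _ _); have := IH (fun y Hy => H y (in_tl _ Hy)); lia.
Qed.

Lemma sumn_all1 (T : eqType) (f : T -> nat) (s : seq T) :
  (forall x, x \in s -> f x <= 1) -> sumn (map f s) = size s ->
  forall x, x \in s -> f x = 1.
Proof.
elim: s => //= y s IH H Hs x.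
have H1 := H y (mem_head _ _).
have H2 : forall z, z \in s -> f z <= 1 by move=> z Hz; apply: H; rewrite inE Hz orbT.
have H3 := sumn_le1 H2.
rewrite inE => /orP[/eqP->|Hx]; first lia.
apply: IH => //; lia.
Qed.

Lemma count_uniq_swap (T : eqType) (X K : seq T) :
  uniq X -> uniq K -> count (mem X) K = count (mem K) X.
Proof.
move=> uX uK; rewrite -!size_filter; apply: perm_size.
apply: uniq_perm; rewrite ?filter_uniq // => v.
by rewrite !mem_filter andbC.
Qed.

Lemma clique_count (X K : seq (seq nat)) :
  uniq K -> (forall u w, u \in K -> w \in K -> (u == w) || cadj u w) ->
  (forall u w, u \in X -> w \in X -> compat u w) -> count (mem X) K <= 1.
Proof.
elim: K => [|a K IH] //=.
move=> /andP[aK uK] HK HX.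
case: (boolP (a \in X)) => Ha.
  rewrite (@eq_in_count _ _ pred0) ?count_pred0 //.
  move=> y Hy /=.
  apply/negP => Hy'.
  have := HK a y (mem_head _ _) (in_tl _ Hy).
  have -> : (a == y) = false by apply/negP => /eqP E; rewrite E Hy in aK.
  by rewrite /cadj (HX a y Ha Hy').
apply: IH => // u w Hu Hw; apply: HK; exact: in_tl.
Qed.


Lemma dfs_sound (Ss : seq (seq (seq nat))) (chosen : seq (seq nat)) (g : seq (seq nat) -> seq nat) :
  dfs9 Ss chosen -> (forall K, K \in Ss -> g K \in K) ->
  (forall u w, u \in map g Ss ++ chosen -> w \in map g Ss ++ chosen -> compat u w) ->
  has (fun p => all (same^~ p) (map g Ss ++ chosen)) pairs.
Proof.
elim: Ss chosen => [|K Ss IH] chosen Hd Hg Hc; first exact: Hd.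
have HgK := Hg K (mem_head _ _).
have Hd' : (if all (compat (g K)) chosen then dfs9 Ss (g K :: chosen) else true).
  exact: (allP Hd _ HgK).
have Hall : all (compat (g K)) chosen.
  apply/allP => w Hw; apply: Hc; first by rewrite mem_cat map_f ?mem_head.
  by rewrite mem_cat Hw orbT.
rewrite Hall in Hd'.
have E : [seq g i | i <- Ss] ++ g K :: chosen =i [seq g i | i <- K :: Ss] ++ chosen.
  by move=> z; rewrite map_cons cat_cons !(inE, mem_cat) orbCA.
have Hg' : forall K', K' \in Ss -> g K' \in K' by move=> K' HK'; apply: Hg; exact: in_tl.
have Hc' : forall u w, u \in [seq g i | i <- Ss] ++ g K :: chosen ->
   w \in [seq g i | i <- Ss] ++ g K :: chosen -> compat u w.
  by move=> u w; rewrite !E; exact: Hc.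
have [p Hp Hp2] := hasP (IH _ Hd' Hg' Hc').
apply/hasP; exists p => //.
by rewrite -(eq_all_r E).
Qed.



Lemma vP (P : vertex) : [/\ partition (val P) [set: point], #|val P| = 3 &
             forall C, C \in val P -> #|C| = 3].
Proof.
case/and3P: (valP P) => H1 /eqP H2 /forallP H3; split => // C HC.
by apply/eqP; move/implyP: (H3 C); apply.
Qed.

Lemma trivP (P : vertex) : trivIset (val P).
Proof. by case: (vP P) => /and3P[]. Qed.

Lemma covP (P : vertex) x : x \in cover (val P).
Proof. by case: (vP P) => /and3P[/eqP -> _ _]; rewrite inE. Qed.

Lemma nz0P (P : vertex) : set0 \notin val P.
Proof. by case: (vP P) => /and3P[]. Qed.

Definition sameV (P : vertex) (x y : point) := [exists C in val P, (x \in C) && (y \in C)].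

Lemma sameVE (P : vertex) x y : sameV P x y = (y \in pblock (val P) x).
Proof.
apply/existsP/idP => [[C /andP[HC /andP[Hx Hy]]]|Hy].
  by rewrite (def_pblock (trivP P) HC Hx).
exists (pblock (val P) x); rewrite pblock_mem ?(covP P) // Hy mem_pblock (covP P) //.
Qed.

Definition lab (P : vertex) (x : point) : nat := index (pblock (val P) x) (enum (val P)).
Definition labl (P : vertex) := [seq lab P x | x <- enum 'I_9].
Definition code (P : vertex) := locked (canon (labl P)).

Lemma size_labl (P : vertex) : size (labl P) = 9.
Proof. by rewrite size_map size_enum_ord. Qed.

Lemma nth_labl (P : vertex) (x : point) : nth 0 (labl P) x = lab P x.
Proof. by rewrite (nth_map x) ?size_enum_ord // nth_ord_enum. Qed.

Lemma lab_eq (P : vertex) x y : (lab P x == lab P y) = sameV P x y.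
Proof.
rewrite /lab index_eq ?mem_enum ?pblock_mem ?(covP P) //.
by rewrite eq_pblock ?(trivP P) ?(covP P) // sameVE.
Qed.

Lemma code_same (P : vertex) (x y : point) : same (code P) (x : nat, y : nat) = sameV P x y.
Proof.
rewrite /same /code -lock /canon /=.
rewrite (nth_map 0) ?(size_labl P) // (nth_map 0) ?(size_labl P) //.
rewrite index_eq ?mem_undup ?mem_nth ?(size_labl P) //.
by rewrite !nth_labl lab_eq.
Qed.

Lemma lab_lt (P : vertex) x : lab P x < 3.
Proof.
case: (vP P) => _ H2 _.
have Hs : size (enum (val P)) = 3 by rewrite -cardE H2.
have := index_mem (pblock (val P) x) (enum (val P)).
by rewrite Hs mem_enum pblock_mem ?(covP P).
Qed.

Lemma lab_count (P : vertex) k : k < 3 -> count (fun x => lab P x == k) (enum 'I_9) = 3.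
Proof.
move=> Hk; case: (vP P) => _ H2 H3.
have Hs : k < size (enum (val P)) by rewrite -cardE H2.
set C := nth set0 (enum (val P)) k.
have HC : C \in val P by rewrite -mem_enum mem_nth.
rewrite cnt_card; transitivity #|C|; last exact: H3 C HC.
apply: eq_card => x; change ((lab P x == k) = (x \in C)).
apply/eqP/idP => [Hl|Hx].
  by rewrite /C -Hl /lab nth_index ?mem_pblock ?(covP P) // mem_enum pblock_mem ?(covP P).
by rewrite /lab (def_pblock (trivP P) HC Hx) /C index_uniq ?enum_uniq.
Qed.

Lemma code_in_L (P : vertex) : code P \in L.
Proof.
rewrite -L0E /L0 /code -lock mem_undup; apply: map_f.
rewrite mem_filter; apply/andP; split.
  apply/allP => k; rewrite mem_iota => /andP[_ Hk].
  rewrite count_map; apply/eqP; exact: (lab_count P Hk).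
apply: mem_tuples; last exact: size_labl P.
by apply/allP => v /mapP[x _ ->]; exact: lab_lt P x.
Qed.





Lemma sameV_sym (P : vertex) (x y : point) : sameV P x y = sameV P y x.
Proof. by apply/existsP/existsP => [][C /and3P[HC Hx Hy]]; exists C; rewrite HC Hx Hy. Qed.

Lemma cells_sub (P Q : vertex) : (forall x, pblock (val P) x = pblock (val Q) x) ->
  {subset val P <= val Q}.
Proof.
move=> E C HC.
have : C != set0 by apply: contraNneq (nz0P P) => <-.
case/set0Pn => x Hx.
by rewrite -(def_pblock (trivP P) HC Hx) E pblock_mem ?covP.
Qed.

Lemma code_inj : injective code.
Proof.
move=> P Q E.
have Hs : forall x y : point, sameV P x y = sameV Q x y.
  by move=> x y; rewrite -!code_same E.
have Hb : forall x, pblock (val P) x = pblock (val Q) x.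
  by move=> x; apply/setP => y; rewrite -!sameVE.
apply: val_inj; apply/setP => C; apply/idP/idP; apply: cells_sub => // x.
Qed.

Lemma t1 (x y : point) : x < y -> (x : nat, y : nat) \in pairs.
Proof.
move=> Hxy.
have Hx9 : (x : nat) \in iota 0 9 by rewrite mem_iota; have := ltn_ord x; lia.
have Hy9 : (y : nat) \in iota 0 9 by rewrite mem_iota; have := ltn_ord y; lia.
move: (allP F9 _ Hx9) => /allP /(_ _ Hy9) /implyP; apply; exact: Hxy.
Qed.
Lemma t2g (ps : seq (nat * nat)) (l w : seq nat) p :
  ~~ has (same w) [seq p <- ps | same l p] -> same l p -> p \in ps -> ~~ same w p.
Proof.
move=> /hasPn Hnc H1 Hp; apply: Hnc.
by rewrite mem_filter H1 Hp.
Qed.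
Lemma t2a (l w : seq nat) p : ~~ compat l w -> same l p -> p \in pairs -> ~~ same w p.
Proof. exact: t2g. Qed.
Lemma t2 (P Q : vertex) (x y : point) : ~~ compat (code P) (code Q) -> x < y -> ~~ (sameV P x y && sameV Q x y).
Proof.
move=> Hnc Hxy; rewrite -!code_same; apply/negP => /andP[H1 H2].
by move: (t2a Hnc H1 (t1 Hxy)); rewrite H2.
Qed.

Lemma noshare (P Q : vertex) : ~~ compat (code P) (code Q) ->
  forall x y : point, x != y -> ~~ (sameV P x y && sameV Q x y).
Proof.
move=> Hnc x y; rewrite neq_ltn => /orP[/(t2 Hnc) //|/(t2 Hnc)].
by rewrite sameV_sym (sameV_sym Q).
Qed.

Lemma cap_le1 (P Q : vertex) (C D : {set point}) :
  (forall x y : point, x != y -> ~~ (sameV P x y && sameV Q x y)) ->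
  C \in val P -> D \in val Q -> #|C :&: D| <= 1.
Proof.
move=> H HC HD.
rewrite leqNgt; apply/negP => /card_gt1P[x [y [Hx Hy Hxy]]].
move: Hx Hy; rewrite !inE => /andP[HxC HxD] /andP[HyC HyD].
have := H x y Hxy; rewrite /sameV.
apply/negP/negPn/andP; split; apply/existsP.
  by exists C; rewrite HC HxC HyC.
by exists D; rewrite HD HxD HyD.
Qed.

Lemma cap_gt0 (P Q : vertex) (C D : {set point}) :
  (forall x y : point, x != y -> ~~ (sameV P x y && sameV Q x y)) ->
  C \in val P -> D \in val Q -> 0 < #|C :&: D|.
Proof.
move=> H HC HD.
rewrite card_gt0; apply/negP => /eqP E0.
case: (vP P) => _ _ H3P; case: (vP Q) => _ H2Q _.
set f := pblock (val Q).
have inj : {in C &, injective f}.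
  move=> x y Hx Hy Hf; case: (eqVneq x y) => // Hxy.
  exfalso; have := H x y Hxy; rewrite /sameV; apply/negP/negPn/andP; split; apply/existsP.
    by exists C; rewrite HC Hx Hy.
  exists (f x); rewrite pblock_mem ?covP // mem_pblock covP /= Hf.
  by rewrite mem_pblock covP.
have pr : f @: C \proper val Q.
  apply/properP; split.
    by apply/subsetP => _ /imsetP[x Hx ->]; rewrite pblock_mem ?covP.
  exists D => //; apply/negP => /imsetP[x Hx Ef].
  have : x \in C :&: D by rewrite inE Hx Ef mem_pblock covP.
  by rewrite E0 inE.
have := proper_card pr.
rewrite card_in_imset // (H3P C HC).
have H2Q' : #|pred_of_set (val Q)| = 3 := H2Q.
by rewrite H2Q'.
Qed.

Lemma adj_of (P Q : vertex) : ~~ compat (code P) (code Q) -> adj P Q.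
Proof.
move=> /noshare H.
apply/forallP => C; apply/implyP => HC; apply/forallP => D; apply/implyP => HD.
have h1 := cap_le1 H HC HD; have h2 := cap_gt0 H HC HD.
by rewrite eqn_leq h1 h2.
Qed.



Lemma head_filter (T : eqType) (a : pred T) (s : seq T) d :
  0 < count a s -> (head d (filter a s) \in s) && a (head d (filter a s)).
Proof.
rewrite -has_count => /hasP[v Hv Hav].
have : v \in filter a s by rewrite mem_filter Hav Hv.
case E: (filter a s) => [|h t] //= _.
have : h \in filter a s by rewrite E mem_head.
by rewrite mem_filter andbC.
Qed.

Lemma clique_sum (X : seq (seq nat)) : uniq X -> {subset X <= L} ->
  sumn [seq count (mem X) K | K <- cl] = 12 * size X.
Proof.
move=> uX XL.
transitivity (sumn [seq count (fun v => v \in K) X | K <- cl]).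
  congr sumn; apply/eq_in_map => K HK; apply: count_uniq_swap => //.
  by move/allP: F2 => /(_ K HK) /andP[].
rewrite (sumn_exch (fun v K => v \in K) X cl).
rewrite -sumn_const; congr sumn; apply/eq_in_map => v Hv.
by move/allP: F3 => /(_ v (XL v Hv)) /eqP.
Qed.

Theorem mainTheorem2 (A : {set vertex}) :
  independent A -> #|A| = 70 ->
  exists i j : point, (i < j)%N /\ A = Sij i j.
Proof.
move=> Hind HA.
set X := map code (enum A).
have uX : uniq X by rewrite map_inj_uniq ?enum_uniq //; exact: code_inj.
have sX : size X = 70 by rewrite size_map -cardE HA.
have XL : {subset X <= L} by move=> _ /mapP[P _ ->]; exact: code_in_L.
have cX : forall u w, u \in X -> w \in X -> compat u w.
  move=> _ _ /mapP[P HP ->] /mapP[Q HQ ->].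
  apply/negPn/negP => /adj_of Hadj.
  rewrite mem_enum in HP; rewrite mem_enum in HQ.
  move/forallP: Hind => /(_ P) /implyP /(_ HP) /forallP /(_ Q) /implyP /(_ HQ).
  by rewrite Hadj.
have Hcl : forall K, K \in cl -> count (mem X) K = 1.
  have Hle : forall K, K \in cl -> count (mem X) K <= 1.
    move=> K HK; move/allP: F2 => /(_ K HK) /andP[uK Hc].
    apply: clique_count => // u w Hu Hw.
    by move/allP: Hc => /(_ u Hu) /allP /(_ w Hw).
  apply: (sumn_all1 Hle).
  by rewrite clique_sum // sX F3s.
set g := fun K : seq (seq nat) => head [::] [seq v <- K | v \in X].
have Hg : forall K, K \in Sq -> (g K \in K) && (g K \in X).
  move=> K HK; apply: head_filter.
  by rewrite (Hcl K (allP F4 K HK)).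
have Hs := dfs_sound F6 (fun K HK => proj1 (andP (Hg K HK))).
have /hasP[[i j] Hp Hall] : has (fun p => all (same^~ p) (map g Sq ++ [::])) pairs.
  apply: Hs => u w; rewrite cats0 => /mapP[K HK ->] /mapP[K' HK' ->].
  by apply: cX; [case/andP: (Hg K HK) | case/andP: (Hg K' HK')].
have HX : forall v, v \in X -> same v (i, j).
  move=> v Hv.
  have [K HK HvK] := hasP (allP F5 v (XL v Hv)).
  have /andP[HgK HgX] := Hg K HK.
  have Hv' : v = g K.
    move/allP: F2 => /(_ K (allP F4 K HK)) /andP[_ /allP /(_ v HvK) /allP /(_ _ HgK)].
    case/orP => [/eqP //|]; by rewrite /cadj cX.
  by apply: (allP Hall); rewrite cats0 Hv' map_f.
have /andP[Hij Hj9] := allP F8 _ Hp; rewrite /= in Hij Hj9.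
have Hi9 : i < 9 by apply: ltn_trans Hij Hj9.
exists (Ordinal Hi9), (Ordinal Hj9); split => //.
have sub : A \subset Sij (Ordinal Hi9) (Ordinal Hj9).
  apply/subsetP => P HP; rewrite inE.
  have := HX (code P) (map_f code (etrans (mem_enum _ _) HP)).
  by rewrite (code_same P (Ordinal Hi9) (Ordinal Hj9)).
apply/eqP; rewrite eqEcard sub HA /=.
set Y := map code (enum (Sij (Ordinal Hi9) (Ordinal Hj9))).
have uY : uniq Y by rewrite map_inj_uniq ?enum_uniq //; exact: code_inj.
have := uniq_leq_size uY (s2 := [seq l <- L | same l (i, j)]).
have Hc : count (fun l => same l (i, j)) L = 70 by apply/eqP; exact: (allP F7 _ Hp).
rewrite size_map -cardE size_filter Hc; apply.
move=> _ /mapP[P HP ->]; rewrite mem_filter code_in_L andbT.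
rewrite mem_enum inE in HP.
by rewrite (code_same P (Ordinal Hi9) (Ordinal Hj9)).
Qed.
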